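(* All $(\mathfrak g,K)$-modules $\mathfrak F_\beta$ with $\beta\in\mathbb C$, $\beta\ne0$, are isomorphic.
   Context: $G=\mathrm{SU}(2,1)=\{g\in\mathrm{SL}_3(\mathbb C):\bar g^t\,\mathrm{diag}(1,1,-1)\,g=\mathrm{diag}(1,1,-1)\}$ with maximal compact subgroup $K$ (the block-diagonal elements with blocks of sizes $2,1$) and unipotent subgroup $N=\{n(b,r)=\begin{pmatrix}1+ir-\frac{|b|^2}2&b&-ir+\frac{|b|^2}2\\-\bar b&1&\bar b\\ ir-\frac{|b|^2}2&b&1-ir+\frac{|b|^2}2\end{pmatrix}:b\in\mathbb C,r\in\mathbb R\}$. $\chi_\beta(n(b,r))=e^{2\pi i\,\mathrm{Re}(\bar\beta b)}$. $\mathfrak F_\beta$ is the space of smooth right-$K$-finite functions $F$ on $G$ with $F(ng)=\chi_\beta(n)F(g)$ for $n\in N$, $g\in G$, a $(\mathfrak g,K)$-module under right translation by $K$ and right differentiation by the Lie algebra $\mathfrak g$ of $G$. *)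

(* Defs.v *)
From HB Require Import structures.
From mathcomp Require Import all_boot all_order all_algebra.
From mathcomp Require Import all_classical all_reals all_analysis.
From mathcomp Require Import complex.
Set Implicit Arguments. Unset Strict Implicit. Unset Printing Implicit Defensive.
Import Order.TTheory GRing.Theory Num.Theory numFieldTopology.Exports numFieldNormedType.Exports.
Local Open Scope ring_scope.
Local Open Scope classical_set_scope.

Section SU21.
Variable R : realType.

Definition C : numClosedFieldType := R[i].
Definition ofR (x : R) : C := (x +i* 0)%C.
Definition iR (x : R) : C := (0 +i* x)%C.
Definition ReC (z : C) : R := complex.Re z.
Definition expi (t : R) : C := (cos t +i* sin t)%C.

Notation M := 'M[C]_3.

Definition adj (g : M) : M := (map_mx (fun z : C => z^*) g)^T.
Definition Jmx : M :=
  \matrix_(i < 3, j < 3) (if i == j then (if (i : nat) == 2%N then -1 else 1) else 0).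

Definition G : set M := [set g | adj g *m Jmx *m g = Jmx /\ \det g = 1].
Definition K : set M :=
  [set k | G k /\ k 0 2 = 0 /\ k 1 2 = 0 /\ k 2 0 = 0 /\ k 2 1 = 0].

Definition nmat (b : C) (r : R) : M :=
  let ir := iR r in let h := (b * b^*) / 2 in
  \matrix_(i < 3, j < 3)
    match (i : nat), (j : nat) with
    | O, O => 1 + ir - h | O, S O => b | O, _ => - ir + h
    | S O, O => - b^*    | S O, S O => 1 | S O, _ => b^*
    | _, O => ir - h     | _, S O => b | _, _ => 1 - ir + h
    end.
Definition N : set M := [set n | exists b r, n = nmat b r].
(* chi_beta(n(b,r)) = exp(2 pi i Re(conj(beta) b)) *)
Definition chi (beta b : C) : C := expi (2 * pi * ReC (beta^* * b)).

Definition su21 : set M := [set X | adj X *m Jmx + Jmx *m X = 0 /\ \tr X = 0].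

Definition mexp (X : M) : M :=
  lim ((fun n => \sum_(k < n) (k`!%:R : C)^-1 *: X ^+ k) @ \oo).

(* functions on G are encoded as functions on M vanishing off G *)
Definition rtrans (k : M) (F : M -> C) : M -> C := fun g => F (g *m k).
Definition dq (F : M -> C) (X g : M) (t : R) : C :=
  (F (g *m mexp (ofR t *: X)) - F g) / ofR t.
Definition rder (X : M) (F : M -> C) : M -> C :=
  fun g => if `[< G g >] then lim (dq F X g @ (0 : R)^') else 0.
Definition iter_der (Xs : seq M) (F : M -> C) : M -> C := foldr rder F Xs.

Definition smooth (F : M -> C) : Prop :=
  forall Xs : seq M, (forall X, X \in Xs -> su21 X) ->
    {within G, continuous (iter_der Xs F)} /\
    (forall X g, su21 X -> G g -> cvg (dq (iter_der Xs F) X g @ (0 : R)^')).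

Definition Kfinite (F : M -> C) : Prop :=
  exists fs : seq (M -> C), forall k, K k ->
    exists a : nat -> C,
      rtrans k F = (fun g => \sum_(j < size fs) a j * nth (fun _ => 0) fs j g).

Definition Fbeta (beta : C) : set (M -> C) :=
  [set F | (forall g, ~ G g -> F g = 0) /\
           (forall b r g, G g -> F (nmat b r *m g) = chi beta b * F g) /\
           smooth F /\ Kfinite F].

Definition gK_iso (A B : set (M -> C)) (Phi : (M -> C) -> (M -> C)) : Prop :=
  (forall F, A F -> B (Phi F)) /\
  (forall F1 F2, A F1 -> A F2 -> Phi F1 = Phi F2 -> F1 = F2) /\
  (forall H, B H -> exists2 F, A F & Phi F = H) /\
  [/\
      (forall (a : C) F1 F2, A F1 -> A F2 ->
          Phi (fun g => a * F1 g + F2 g) = (fun g => a * Phi F1 g + Phi F2 g)),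
      (forall k F, K k -> A F -> Phi (rtrans k F) = rtrans k (Phi F)) &
      (forall X F, su21 X -> A F -> Phi (rder X F) = rder X (Phi F))].

End SU21.

(* Main.v *)
Require Import Defs.
From HB Require Import structures.
From mathcomp Require Import all_boot all_order all_algebra.
From mathcomp Require Import all_classical all_reals all_analysis.
From mathcomp Require Import complex.
From mathcomp Require Import ring.
Import Order.TTheory GRing.Theory Num.Theory numFieldTopology.Exports numFieldNormedType.Exports.
Local Open Scope ring_scope.
Local Open Scope classical_set_scope.
Section S.
Variable R : realType.
Notation M := 'M[C R]_3.

Lemma ord3P (P : 'I_3 -> Prop) : P 0 -> P 1 -> P 2 -> forall i, P i.
Proof.
move=> P0 P1 P2 [[|[|[|i]]] Hi] //.
- by have -> : Ordinal Hi = 0 by apply/val_inj.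
- by have -> : Ordinal Hi = 1 by apply/val_inj.
- by have -> : Ordinal Hi = 2 by apply/val_inj.
Qed.
Lemma mulmx3E (A B : M) i j : (A *m B) i j = A i 0 * B 0 j + A i 1 * B 1 j + A i 2 * B 2 j.
Proof.
rewrite !mxE !big_ord_recr big_ord0 /= add0r.
by congr (_ * _ + _ * _ + _ * _); congr (_ _ _); apply/val_inj.
Qed.

Lemma adjM (A B : M) : adj (A *m B) = adj B *m adj A.
Proof. by rewrite /adj map_mxM trmx_mul. Qed.

Lemma JJ : Jmx R *m Jmx R = 1.
Proof.
apply/matrixP; elim/ord3P; elim/ord3P; rewrite !mulmx3E !mxE /=.
all: rewrite ?mulr1 ?mulr0 ?mul0r ?addr0 ?add0r ?mulrNN ?mulr1 //.
Qed.

Lemma G_mul (a b : M) : G a -> G b -> G (a *m b).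
Proof.
move=> [ha da] [hb db]; split; last by rewrite det_mulmx da db mulr1.
rewrite adjM !mulmxA.
have -> : adj b *m adj a *m Jmx R *m a *m b = adj b *m (adj a *m Jmx R *m a) *m b by rewrite !mulmxA.
by rewrite ha hb.
Qed.

Lemma adj1 : adj (1 : M) = 1.
Proof. by rewrite /adj map_mx1 trmx1. Qed.

Lemma G_inv (t : M) : G t ->
  [/\ (Jmx R *m adj t *m Jmx R) *m t = 1, t *m (Jmx R *m adj t *m Jmx R) = 1
    & G (Jmx R *m adj t *m Jmx R)].
Proof.
move=> [ht dt].
set s := Jmx R *m adj t *m Jmx R.
have st : s *m t = 1.
  have -> : s *m t = Jmx R *m (adj t *m Jmx R *m t) by rewrite /s !mulmxA.
  by rewrite ht JJ.
have ts : t *m s = 1 by apply: mulmx1C.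
split => //; split.
  have -> : adj s *m Jmx R *m s = adj s *m (adj t *m Jmx R *m t) *m s by rewrite ht.
  have -> : adj s *m (adj t *m Jmx R *m t) *m s = adj (t *m s) *m Jmx R *m (t *m s).
    by rewrite adjM !mulmxA.
  by rewrite ts adj1 mulmx1 mul1mx.
have := congr1 determinant st; rewrite det_mulmx dt mulr1 => ->.
by rewrite det1.
Qed.
Lemma coord_mul_cont (t : M) i j : continuous (fun g : M => (t *m g) i j).
Proof.
move=> g.
have -> : (fun g : M => (t *m g) i j) =
   ((fun h : M => t i 0 * h 0 j) + (fun h : M => t i 1 * h 1 j)) + (fun h : M => t i 2 * h 2 j).
  by apply/funext => h; rewrite mulmx3E.
have cc k : {for g, continuous (fun h : M => t i k * h k j)}.
  apply: (@continuousM (C R) M (fun=> t i k) (fun h : M => h k j)).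
    exact: cst_continuous.
  exact: coord_continuous.
by apply: continuousD; [apply: continuousD|]; apply: cc.
Qed.

Lemma mul_cont (t : M) : continuous (fun g : M => t *m g).
Proof.
move=> g A /= [P HP sPA].
change (nbhs g (fun h => A (t *m h))).
apply: (@filterS _ _ _ [set h : M | forall ij : 'I_3 * 'I_3, P ij.1 ij.2 ((t *m h) ij.1 ij.2)]).
  by move=> h Hh; apply: sPA => i j; exact: (Hh (i, j)).
apply: (@filter_forall M ('I_3 * 'I_3)%type (fun ij h => P ij.1 ij.2 ((t *m h) ij.1 ij.2)) (nbhs g)) => -[i j] /=.
have hc := coord_mul_cont t i j g. apply: hc. exact: (HP i j).
Qed.

Lemma within_L (t : M) (A : set M) (H : M -> C R) :
  (forall g, A g -> A (t *m g)) ->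
  {within A, continuous H} -> {within A, continuous (fun g => H (t *m g))}.
Proof.
move=> tA /subspace_continuousP cH; apply/subspace_continuousP => x Ax.
have h1 : (fun g => t *m g) @ within A (nbhs x) --> within A (nbhs (t *m x)).
  move=> B /= hB.
  have hB' := mul_cont t x _ hB.
  change (nbhs x (fun z => A z -> B (t *m z))).
  have sub : (fun z => A (t *m z) -> B (t *m z)) `<=` (fun z => A z -> B (t *m z)) by move=> z + Az; apply; exact: tA.
  exact: (filterS sub hB').
exact: (cvg_comp _ _ h1 (cH _ (tA _ Ax))).
Qed.

Definition L (t : M) (F : M -> C R) : M -> C R := fun g => F (t *m g).

Lemma dq_L t F X g : dq (L t F) X g = dq F X (t *m g).
Proof. by apply/funext => x; rewrite /dq /L mulmxA. Qed.

Lemma rder_L t F X : (forall g, G (t *m g) <-> G g) ->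
  rder X (L t F) = L t (rder X F).
Proof.
move=> hG; apply/funext => g; rewrite /rder {2}/L dq_L.
case: (asboolP (G g)) => Gg; case: (asboolP (G (t *m g))) => Gtg //.
- by exfalso; apply: Gtg; apply/hG.
- by exfalso; apply: Gg; apply/hG.
Qed.

Lemma iter_L t F Xs : (forall g, G (t *m g) <-> G g) ->
  iter_der Xs (L t F) = L t (iter_der Xs F).
Proof.
move=> hG; elim: Xs => [//|X Xs IH] /=.
by rewrite IH rder_L.
Qed.

Lemma transfer (b1 b2 : C R) (t : M) :
  (forall g, G (t *m g) <-> G g) ->
  (forall b r, exists b' r', t *m nmat b r = nmat b' r' *m t /\ chi b1 b' = chi b2 b) ->
  forall F, Fbeta b1 F -> Fbeta b2 (L t F).
Proof.
move=> hG hN F [F0 [Feq [Fs [fs Ffin]]]].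
split; [|split; [|split]].
- by move=> g Gg; apply: F0 => /hG.
- move=> b r g Gg; have [b' [r' [e hc]]] := hN b r.
  rewrite /L mulmxA e -mulmxA Feq ?hc //; exact/hG.
- move=> Xs HXs; have [c d] := Fs Xs HXs; rewrite (iter_L _ _ _ hG); split.
    by apply: within_L => // g /hG.
  move=> X g HX Gg; rewrite dq_L; apply: d => //; exact/hG.
- exists (map (L t) fs) => k Kk; have [a ha] := Ffin k Kk; exists a.
  apply/funext => g; rewrite size_map.
  have := congr1 (fun f => f (t *m g)) ha; rewrite /rtrans /L /= => e.
  rewrite mulmxA e; apply: eq_bigr => j _.
  by rewrite (nth_map (fun _ => 0)).
Qed.
Lemma det2E (B : 'M[C R]_2) : \det B = B 0 0 * B 1 1 - B 0 1 * B 1 0.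
Proof.
rewrite (expand_det_row _ 0) !big_ord_recr big_ord0 /cofactor !det_mx11 !mxE.
have -> : (widen_ord (leqnSn 1) ord_max : 'I_2) = 0 by apply/val_inj.
have -> : (ord_max : 'I_2) = 1 by apply/val_inj.
have -> : lift 0 (0 : 'I_1) = (1 : 'I_2) by apply/val_inj.
have -> : lift 1 (0 : 'I_1) = (0 : 'I_2) by apply/val_inj.
cbn -[GRing.mul GRing.add GRing.opp GRing.exp]. ring. Qed.
Lemma det3E (A : M) : \det A = A 0 0 * (A 1 1 * A 2 2 - A 1 2 * A 2 1)
   - A 0 1 * (A 1 0 * A 2 2 - A 1 2 * A 2 0) + A 0 2 * (A 1 0 * A 2 1 - A 1 1 * A 2 0).
Proof.
rewrite (expand_det_row _ 0) !big_ord_recr big_ord0 /cofactor !det2E !mxE.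
have -> : (widen_ord (leqnSn 2) (widen_ord (leqnSn 1) ord_max) : 'I_3) = 0 by apply/val_inj.
have -> : (widen_ord (leqnSn 2) ord_max : 'I_3) = 1 by apply/val_inj.
have -> : (ord_max : 'I_3) = 2 by apply/val_inj.
have -> : lift 0 (0 : 'I_2) = (1 : 'I_3) by apply/val_inj.
have -> : lift 0 (1 : 'I_2) = (2 : 'I_3) by apply/val_inj.
have -> : lift 1 (0 : 'I_2) = (0 : 'I_3) by apply/val_inj.
have -> : lift 1 (1 : 'I_2) = (2 : 'I_3) by apply/val_inj.
have -> : lift 2 (0 : 'I_2) = (0 : 'I_3) by apply/val_inj.
have -> : lift 2 (1 : 'I_2) = (1 : 'I_3) by apply/val_inj.
cbn -[GRing.mul GRing.add GRing.opp GRing.exp]. ring. Qed.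
Lemma conj_ofR (x : R) : (ofR x)^* = ofR x.
Proof. by rewrite /ofR /Num.conj /= oppr0. Qed.
Lemma conj_iR (x : R) : (iR x)^* = - iR x.
Proof. rewrite /iR /Num.conj /=. simpc. reflexivity. Qed.
Lemma iRM (a r : R) : iR (a * r) = ofR a * iR r.
Proof. rewrite /iR /ofR. simpc. reflexivity. Qed.
Lemma ofRM (a r : R) : ofR (a * r) = ofR a * ofR r.
Proof. rewrite /ofR. simpc. reflexivity. Qed.
Lemma ofR_eq0 (a : R) : (ofR a == 0) = (a == 0).
Proof. by rewrite /ofR eq_complex /= eqxx andbT. Qed.

Definition tmx (u : C R) (p : R) : M :=
  let P := ofR p in let c := (P + P^-1) / 2 in let s := (P - P^-1) / 2 in
  \matrix_(i < 3, j < 3)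
   match (i : nat), (j : nat) with
   | O, O => u * c | O, S O => 0 | O, _ => u * s
   | S O, S O => u ^- 2 | S O, _ => 0
   | _, O => u * s | _, S O => 0 | _, _ => u * c end.

Lemma two_neq0 : (2 : C R) != 0.
Proof. by rewrite pnatr_eq0. Qed.

Lemma tmx_nmat u p b r : u != 0 -> u^* = u^-1 -> p != 0 ->
  tmx u p *m nmat b r = nmat (ofR p * u ^+ 3 * b) (p * p * r) *m tmx u p.
Proof.
move=> u0 uc p0; have P0 : ofR p != 0 by rewrite ofR_eq0.
have t0 := two_neq0.
have hb : (ofR p * u ^+ 3 * b)^* = ofR p * u ^- 3 * b^*.
  by rewrite rmorphM rmorphM rmorphXn -/(Num.conj (ofR p)) -/(Num.conj u) -/(Num.conj b) conj_ofR uc exprVn.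
apply/matrixP; elim/ord3P; elim/ord3P; rewrite !mulmx3E !mxE hb iRM ofRM /=.
all: by field; rewrite ?u0 ?P0 ?t0.
Qed.

Lemma conjV (x : C R) : (x^-1)^* = (x^*)^-1.
Proof. by rewrite fmorphV. Qed.

Lemma tmx_G u p : u != 0 -> u^* = u^-1 -> p != 0 -> G (tmx u p).
Proof.
move=> u0 uc p0; have P0 : ofR p != 0 by rewrite ofR_eq0.
have t0 := two_neq0.
have hc : ((ofR p + (ofR p)^-1) / 2)^* = (ofR p + (ofR p)^-1) / 2.
  by rewrite rmorphM rmorphD !fmorphV ?rmorph_nat -/(Num.conj (ofR p)) conj_ofR.
have hs : ((ofR p - (ofR p)^-1) / 2)^* = (ofR p - (ofR p)^-1) / 2.
  by rewrite rmorphM rmorphB !fmorphV ?rmorph_nat -/(Num.conj (ofR p)) conj_ofR.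
have e1 : (u * ((ofR p + (ofR p)^-1) / 2))^* = u^-1 * ((ofR p + (ofR p)^-1) / 2).
  by rewrite rmorphM -/(Num.conj u) -/(Num.conj ((ofR p + (ofR p)^-1) / 2)) hc uc.
have e2 : (u * ((ofR p - (ofR p)^-1) / 2))^* = u^-1 * ((ofR p - (ofR p)^-1) / 2).
  by rewrite rmorphM -/(Num.conj u) -/(Num.conj ((ofR p - (ofR p)^-1) / 2)) hs uc.
have e3 : (u ^- 2)^* = u ^+ 2.
  by rewrite fmorphV rmorphXn -/(Num.conj u) uc exprVn invrK.
split; last first.
  rewrite det3E !mxE /=.
  by field; rewrite ?u0 ?P0 ?t0.
apply/matrixP; elim/ord3P; elim/ord3P; rewrite /adj !mulmx3E !mxE /=.
all: rewrite ?e1 ?e2 ?e3 ?rmorph0.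
all: by field; rewrite ?u0 ?P0 ?t0.
Qed.

Lemma main_iso (beta1 beta2 : C R) : beta1 != 0 -> beta2 != 0 ->
  exists Phi : (M -> C R) -> (M -> C R), gK_iso (Fbeta beta1) (Fbeta beta2) Phi.
Proof.
move=> n1 n2.
set lam := beta2^* / beta1^*.
have c1 : beta1^* != 0 by rewrite conjC_eq0.
have c2 : beta2^* != 0 by rewrite conjC_eq0.
have lam0 : lam != 0 by rewrite mulf_neq0 ?invr_eq0.
have nl0 : `|lam| != 0 by rewrite normr_eq0.
pose p := Normc.normc lam.
have hp : ofR p = `|lam| by [].
have p0 : p != 0 by rewrite -ofR_eq0 hp.
pose u := 3.-root (lam / `|lam|).
have u3 : u ^+ 3 = lam / `|lam| by rewrite /u rootCK.
have nu : `|u| = 1.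
  apply/eqP; rewrite -(@pexpr_eq1 _ _ 3) // -normrX u3 normf_div normr_id.
  by rewrite divff.
have u0 : u != 0 by rewrite -normr_eq0 nu oner_eq0.
have uu : u * u^* = 1 by rewrite -normCK nu expr1n.
have uc : u^* = u^-1.
  by rewrite -[u^*]mul1r -(mulVf u0) -mulrA uu mulr1.
have hlam : ofR p * u ^+ 3 = lam by rewrite u3 hp mulrC divfK.
pose t := tmx u p.
have Gt : G t := tmx_G u p u0 uc p0.
have [st ts Gs] := G_inv t Gt.
set s := Jmx R *m adj t *m Jmx R in st ts Gs.
have hGt : forall g, G (t *m g) <-> G g.
  move=> g; split => h; last exact: G_mul.
  have -> : g = s *m (t *m g) by rewrite mulmxA st mul1mx.
  by apply: G_mul.
have hGs : forall g, G (s *m g) <-> G g.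
  move=> g; split => h; last exact: G_mul.
  have -> : g = t *m (s *m g) by rewrite mulmxA ts mul1mx.
  by apply: G_mul.
have hchi : forall b, chi beta1 (lam * b) = chi beta2 b.
  move=> b; rewrite /chi; congr (expi (_ * ReC _)).
  by rewrite /lam; field; rewrite c1.
have htN : forall b r, t *m nmat b r = nmat (lam * b) (p * p * r) *m t.
  by move=> b r; rewrite -hlam tmx_nmat.
exists (L t); split; [|split; [|split]].
- apply: (transfer _ _ _ hGt) => b r.
  by exists (lam * b), (p * p * r); split; [exact: htN | exact: hchi].
- move=> F1 F2 _ _ e; apply/funext => g.
  have := congr1 (fun f => f (s *m g)) e; rewrite /L; cbv beta; rewrite mulmxA ts mul1mx.
  by [].
- move=> H HB; exists (L s H); last first.
    by apply/funext => g; rewrite /L mulmxA st mul1mx.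
  apply: (transfer beta2 beta1 s hGs _ H HB) => b r.
  exists (b / lam), (r / (p * p)); split; last first.
    by rewrite -hchi mulrC divfK.
  have e1 : lam * (b / lam) = b by rewrite mulrC divfK.
  have e2 : p * p * (r / (p * p)) = r by rewrite mulrC divfK // mulf_neq0.
  have e := htN (b / lam) (r / (p * p)); rewrite e1 e2 in e.
  have -> : s *m nmat b r = s *m (nmat b r *m t) *m s.
    by rewrite -!mulmxA ts mulmx1.
  by rewrite -e !mulmxA st mul1mx.
- split.
  + by [].
  + by move=> k F _ _; apply/funext => g; rewrite /L /rtrans mulmxA.
  + by move=> X F _ _; rewrite (rder_L _ _ _ hGt).
Qed.

End S.

Theorem proposition8p2 (R : realType) (beta1 beta2 : C R) :
  beta1 != 0 -> beta2 != 0 ->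
  exists Phi : ('M[C R]_3 -> C R) -> ('M[C R]_3 -> C R),
    gK_iso (Fbeta beta1) (Fbeta beta2) Phi.
Proof. exact: main_iso. Qed.
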